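(* Let $\tau = \frac{1+\sqrt{5}}{2}$. Then $$\tau = -\sum_{k=1}^{\infty} \frac{\varphi(k)}{k} \log\left(1 - \frac{1}{\tau^k}\right), \qquad \frac{1}{\tau} = -\sum_{k=1}^{\infty} \frac{\mu(k)}{k} \log\left(1 - \frac{1}{\tau^k}\right).$$
   Context: $\tau=\frac{1+\sqrt5}{2}$ is the golden ratio. $\varphi(k)$ is Euler's totient function (the number of integers $1\le j\le k$ with $\gcd(j,k)=1$). $\mu(k)$ is the Möbius function: $\mu(1)=1$, $\mu(k)=0$ if $k$ is not squarefree, and $\mu(k)=(-1)^r$ if $k$ is squarefree with $r$ distinct prime factors. $\log$ denotes the natural logarithm. *)

(* Defs.v *)
From Stdlib Require Import Reals Lra Lia Arith List.
Import ListNotations.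
From Stdlib Require Import Bool.
Local Open Scope bool_scope.
Open Scope R_scope.

Definition tau : R := (1 + sqrt 5) / 2.

Definition phi (k : nat) : nat :=
  length (filter (fun j => Nat.eqb (Nat.gcd j k) 1) (seq 1 k)).

Definition is_primeb (p : nat) : bool :=
  Nat.ltb 1 p &&
  forallb (fun d => negb (Nat.eqb (p mod d) 0)) (seq 2 (p - 2)).

Definition squarefreeb (k : nat) : bool :=
  forallb (fun d => negb (Nat.eqb (k mod (d * d)) 0)) (seq 2 k).

Definition omega (k : nat) : nat :=
  length (filter (fun p => is_primeb p && Nat.eqb (k mod p) 0) (seq 1 k)).

Definition mu (k : nat) : R :=
  if squarefreeb k then (-1) ^ omega k else 0.

(* Main.v *)
Require Import Defs.
From Stdlib Require Import Reals Lra Lia Arith List Classical.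
From Stdlib Require Import Bool.
Local Open Scope bool_scope.
Open Scope R_scope.
Fixpoint rsn (F : nat -> nat) (n : nat) : nat :=
  match n with O => O | S n => (rsn F n + F n)%nat end.
Lemma rsn_ext F G n : (forall i, (i < n)%nat -> F i = G i) -> rsn F n = rsn G n.
Proof. induction n as [|n IH]; intros H; simpl; auto.
  rewrite IH by (intros; apply H; lia). rewrite (H n) by lia. reflexivity. Qed.
Lemma rsn_shift F n : rsn F (S n) = (F O + rsn (fun i => F (S i)) n)%nat.
Proof. induction n as [|n IH]; [simpl; lia|].
  change (rsn F (S (S n))) with (rsn F (S n) + F (S n))%nat. rewrite IH. simpl. lia. Qed.
Lemma len_filter f a n : length (filter f (seq a n)) = rsn (fun i => if f (a+i)%nat then 1 else 0)%nat n.
Proof. revert a; induction n as [|n IH]; intros a; [reflexivity|].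
  rewrite rsn_shift. simpl seq. simpl filter. rewrite Nat.add_0_r.
  rewrite (rsn_ext _ (fun i => if f (S a + i)%nat then 1 else 0)%nat).
  2:{ intros i _; replace (S a + i)%nat with (a + S i)%nat by lia; reflexivity. }
  rewrite <- IH. destruct (f a); simpl; reflexivity. Qed.

Lemma phi_rsn k : phi k = rsn (fun i => if Nat.eqb (Nat.gcd (S i) k) 1 then 1 else 0)%nat k.
Proof. unfold phi. rewrite len_filter. apply rsn_ext. intros; reflexivity. Qed.

Module NTphi.
From mathcomp Require Import all_boot zify.
From mathcomp Require cyclic.
Local Open Scope nat_scope.

Lemma rsn_big F n : \sum_(0 <= i < n) F i = rsn F n.
Proof. elim: n => [|n IH]; first by rewrite big_geq. by rewrite big_nat_recr //= IH. Qed.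

Lemma modE n d : Nat.modulo n d = n %% d.
Proof.
case: d => [|d]; first by rewrite modn0; destruct n.
symmetry; apply: (Nat.mod_unique _ _ (n %/ d.+1)).
  by apply/ltP; rewrite ltn_mod.
by rewrite {1}(divn_eq n d.+1) mulnC.
Qed.

Lemma divE d n : Nat.divide d n <-> d %| n.
Proof. split.
  by move=> [k ->]; apply/dvdnP; exists k.
by move/dvdnP=> [k ->]; exists k.
Qed.

Lemma gcdE a b : Nat.gcd a b = gcdn a b.
Proof.
apply: Nat.gcd_unique.
- by apply/divE; apply: dvdn_gcdl.
- by apply/divE; apply: dvdn_gcdr.
- by move=> q /divE h1 /divE h2; apply/divE; rewrite dvdn_gcd h1 h2.
Qed.

Lemma eqbE a b : Nat.eqb a b = (a == b).
Proof. by case: (Nat.eqb_spec a b) => [->|/eqP h]; [rewrite eqxx | apply/esym/negbTE]. Qed.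

Lemma phi_totient k : phi k = totient k.
Proof.
rewrite phi_rsn totient_count_coprime rsn_big.
case: k => [|k] //.
rewrite [RHS]rsn_shift. cbn [rsn].
rewrite gcdE gcdnn /coprime gcdn0 eqbE.
rewrite !plusE addnC; congr (_ + _).
  apply: rsn_ext => i _. by rewrite gcdE eqbE gcdnC; case: (_ == 1).
Qed.

Lemma phi_div_sum n : rsn (fun i => if Nat.eqb (Nat.modulo n (S i)) 0 then phi (S i) else 0)%nat n = n.
Proof.
have := cyclic.sum_totient_dvd n.
rewrite big_mkcond /= -(big_mkord xpredT (fun d => if d %| n then totient d else 0)).
rewrite rsn_big rsn_shift.
rewrite dvd0n.
case: n => [|n]; first by [].
move=> H; rewrite -[in RHS]H.
have E0 : (if n.+1 == 0 then totient 0 else 0) = 0 by [].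
rewrite E0 plusE add0n.
apply: rsn_ext => i _. by rewrite -/(Nat.modulo n.+1 i.+1) modE eqbE phi_totient.
Qed.
End NTphi.
Lemma rsn_add F G n : rsn (fun i => F i + G i)%nat n = (rsn F n + rsn G n)%nat.
Proof. induction n; simpl; lia. Qed.
Lemma rsn_zero_ext F n m : (n <= m)%nat -> (forall i, (n <= i < m)%nat -> F i = 0%nat) -> rsn F m = rsn F n.
Proof. induction m as [|m IH]; intros H1 H2.
  - replace n with 0%nat by lia; reflexivity.
  - destruct (Nat.eq_dec n (S m)) as [->|Hn]; [reflexivity|].
    simpl. rewrite H2 by lia. rewrite IH by (try lia; intros; apply H2; lia). lia. Qed.

Fixpoint rs (F : nat -> R) (n : nat) : R :=
  match n with O => 0 | S n => rs F n + F n end.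
Lemma rs_ext F G n : (forall i, (i < n)%nat -> F i = G i) -> rs F n = rs G n.
Proof. induction n as [|n IH]; intros H; simpl; auto.
  rewrite IH by (intros; apply H; lia). rewrite (H n) by lia. reflexivity. Qed.
Lemma rs_add F G n : rs (fun i => F i + G i) n = rs F n + rs G n.
Proof. induction n; simpl; lra. Qed.
Lemma rs_zero_ext F n m : (n <= m)%nat -> (forall i, (n <= i < m)%nat -> F i = 0) -> rs F m = rs F n.
Proof. induction m as [|m IH]; intros H1 H2.
  - replace n with 0%nat by lia; reflexivity.
  - destruct (Nat.eq_dec n (S m)) as [->|Hn]; [reflexivity|].
    simpl. rewrite H2 by lia. rewrite IH by (try lia; intros; apply H2; lia). lra. Qed.
Lemma rs_zero F n : (forall i, (i < n)%nat -> F i = 0) -> rs F n = 0.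
Proof. intros H. rewrite (rs_zero_ext F 0 n); [reflexivity|lia|intros; apply H; lia]. Qed.

Lemma rs_mult G k N : (1 <= k)%nat ->
  rs (fun j => G (k * S j)%nat) (N / k) = rs (fun i => if Nat.eqb (S i mod k) 0 then G (S i) else 0) N.
Proof. intros Hk. induction N as [|N IH].
  - rewrite Nat.Div0.div_0_l. reflexivity.
  - simpl rs at 2. rewrite <- IH.
    assert (Hd := Nat.div_mod N k ltac:(lia)). assert (Hm := Nat.mod_upper_bound N k ltac:(lia)).
    destruct (Nat.eq_dec (N mod k) (k - 1)) as [E|E].
    + assert (Q : (S (N / k) = S N / k)%nat) by (apply (Nat.div_unique _ _ _ 0); nia).
      assert (R0 : 0%nat = S N mod k) by (apply (Nat.mod_unique _ _ (S (N/k))); nia).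
      rewrite <- Q, <- R0. simpl rs. rewrite Nat.eqb_refl. f_equal. f_equal. nia.
    + assert (Q : (N / k = S N / k)%nat) by (apply (Nat.div_unique _ _ _ (S (N mod k))); nia).
      assert (R0 : (S (N mod k) = S N mod k)%nat) by (apply (Nat.mod_unique _ _ (N/k)); nia).
      rewrite <- Q, <- R0. simpl Nat.eqb. lra.
Qed.

Definition pr p := is_primeb p = true.

Lemma modd a b : b <> 0%nat -> (a mod b = 0)%nat <-> Nat.divide b a.
Proof. apply Nat.mod_divide. Qed.

Lemma pr_spec p : pr p <-> ((1 < p)%nat /\ forall d, (2 <= d < p)%nat -> (p mod d <> 0)%nat).
Proof. unfold pr, is_primeb. rewrite Bool.andb_true_iff, Nat.ltb_lt, forallb_forall.
  split; intros [H1 H2]; split; auto; intros d Hd.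
  - specialize (H2 d). rewrite in_seq in H2. apply Bool.negb_true_iff, Nat.eqb_neq in H2; auto. lia.
  - rewrite in_seq in Hd. apply Bool.negb_true_iff, Nat.eqb_neq. apply H2. lia. Qed.

Lemma pr_gt1 p : pr p -> (1 < p)%nat.
Proof. intros H; apply pr_spec in H; tauto. Qed.

Lemma pr_div p d : pr p -> Nat.divide d p -> d = 1%nat \/ d = p.
Proof. intros Hp Hd. apply pr_spec in Hp. destruct Hp as [H1 H2].
  assert (d <> 0%nat) by (intro; subst; apply Nat.divide_0_l in Hd; lia).
  assert (d <= p)%nat by (apply Nat.divide_pos_le; auto; lia).
  destruct (Nat.eq_dec d 1); auto. destruct (Nat.eq_dec d p); auto.
  exfalso. apply (H2 d). lia. apply modd; auto. Qed.

Lemma pr_gcd1 p a : pr p -> ~ Nat.divide p a -> Nat.gcd p a = 1%nat.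
Proof. intros Hp Ha. destruct (pr_div p (Nat.gcd p a) Hp (Nat.gcd_divide_l _ _)) as [H|H]; auto.
  exfalso. apply Ha. rewrite <- H. apply Nat.gcd_divide_r. Qed.

Lemma div_dec d a : Nat.divide d a \/ ~ Nat.divide d a.
Proof. apply classic. Qed.

Lemma euclid p a b : pr p -> Nat.divide p (a * b) -> Nat.divide p a \/ Nat.divide p b.
Proof. intros Hp H. destruct (div_dec p a) as [Ha|Ha]; auto.
  right. apply (Nat.gauss p a b H). apply pr_gcd1; auto. Qed.

Lemma sqf_spec k : (1 <= k)%nat -> (squarefreeb k = true <-> forall d, (2 <= d)%nat -> ~ Nat.divide (d*d) k).
Proof. intros Hk. unfold squarefreeb. rewrite forallb_forall. split.
  - intros H d Hd Hdiv. assert (d * d <= k)%nat by (apply Nat.divide_pos_le; auto; lia).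
    specialize (H d). rewrite in_seq in H. assert (HH : negb (k mod (d*d) =? 0) = true) by (apply H; nia).
    apply Bool.negb_true_iff, Nat.eqb_neq in HH. apply HH. apply modd; [nia|auto].
  - intros H d Hd. rewrite in_seq in Hd. apply Bool.negb_true_iff, Nat.eqb_neq. intro E.
    apply (H d); [lia|]. apply modd; [nia|auto]. Qed.

Lemma sqf_mul p e : pr p -> (1 <= e)%nat -> ~ Nat.divide p e -> squarefreeb (p*e) = squarefreeb e.
Proof. intros Hp He Hpe. assert (P1 := pr_gt1 p Hp). apply Bool.eq_true_iff_eq.
  rewrite (sqf_spec (p*e)) by nia. rewrite (sqf_spec e) by lia. split.
  - intros H d Hd Hdiv. apply (H d Hd). apply Nat.divide_mul_r. auto.
  - intros H d Hd Hdiv. destruct (div_dec p d) as [[t Ht]|Hpd].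
    + subst d. destruct Hdiv as [z Hz]. apply Hpe. exists (z * t * t)%nat.
      apply (Nat.mul_cancel_l _ _ p); [lia|]. rewrite Hz. ring.
    + apply (H d Hd). apply (Nat.gauss _ p); auto.
      rewrite Nat.gcd_comm. apply pr_gcd1; auto. intro D. apply euclid in D; tauto. Qed.

Definition omf k i := (if is_primeb (S i) && Nat.eqb (k mod (S i)) 0 then 1 else 0)%nat.
Lemma omega_ext k B : (1 <= k)%nat -> (k <= B)%nat -> omega k = rsn (omf k) B.
Proof. intros H1 H2. unfold omega. rewrite len_filter. rewrite (rsn_zero_ext (omf k) k B); auto.
  intros i Hi. unfold omf. rewrite Nat.mod_small by lia.
    destruct (Nat.eqb_spec k 0); [lia|]. rewrite Bool.andb_false_r. reflexivity. Qed.

Lemma rsn_ind1 p m : (1 <= p <= m)%nat -> rsn (fun i => if Nat.eqb (S i) p then 1 else 0)%nat m = 1%nat.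
Proof. intros H. induction m as [|m IH]; [lia|]. cbn [rsn].
  destruct (Nat.eq_dec p (S m)) as [->|Hn].
  - rewrite Nat.eqb_refl. rewrite (rsn_zero_ext _ 0 m); [reflexivity|lia|].
    intros i Hi. simpl. destruct (Nat.eqb_spec i m); [lia|reflexivity].
  - rewrite IH by lia. destruct (Nat.eqb_spec (S m) p); [lia|]. reflexivity. Qed.

Lemma omega_mul p e : pr p -> (1 <= e)%nat -> ~ Nat.divide p e -> omega (p*e) = S (omega e).
Proof. intros Hp He Hpe. assert (P1 := pr_gt1 p Hp).
  rewrite (omega_ext (p*e) (p*e)) by nia. rewrite (omega_ext e (p*e)) by nia.
  rewrite <- Nat.add_1_r. rewrite <- (rsn_ind1 p (p*e)) by nia. rewrite <- rsn_add.
  apply rsn_ext. intros i Hi. unfold omf.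
  destruct (Nat.eq_dec (S i) p) as [E|E].
  - rewrite E, Nat.eqb_refl. unfold pr in Hp. rewrite Hp. simpl.
    replace ((p*e) mod p)%nat with 0%nat by (symmetry; apply modd; [lia| exists e; ring]).
    destruct (Nat.eqb_spec (e mod p) 0) as [E2|E2]; [|reflexivity].
    exfalso; apply Hpe; apply modd; auto; lia.
  - destruct (Nat.eqb_spec (S i) p); [lia|]. rewrite Nat.add_0_r.
    destruct (is_primeb (S i)) eqn:Hq; [|reflexivity]. cbn [andb].
    destruct (Nat.eqb_spec ((p*e) mod S i) 0) as [E1|E1];
    destruct (Nat.eqb_spec (e mod S i) 0) as [E2|E2]; simpl; try lia; exfalso.
    + apply E2. apply modd; [lia|]. apply modd in E1; [|lia].
      destruct (euclid (S i) p e Hq E1) as [D|D]; auto.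
      destruct (pr_div p (S i) Hp D) as [D1|D1]; [|lia].
      assert (X := pr_gt1 _ Hq). lia.
    + apply E1. apply modd; [lia|]. apply modd in E2; [|lia]. apply Nat.divide_mul_r; auto.
Qed.

Lemma mu_mul p e : pr p -> (1 <= e)%nat -> ~ Nat.divide p e -> mu (p*e) = - mu e.
Proof. intros Hp He Hpe. unfold mu. rewrite sqf_mul by auto. rewrite omega_mul by auto.
  destruct (squarefreeb e); simpl; ring. Qed.

Lemma mu_mul0 p e : (2 <= p)%nat -> (1 <= e)%nat -> Nat.divide p e -> mu (p*e) = 0.
Proof. intros Hp He Hpe. unfold mu. destruct (squarefreeb (p*e)) eqn:E; auto.
  assert (E' := proj1 (sqf_spec (p*e) ltac:(nia)) E). exfalso. apply (E' p Hp). destruct Hpe as [z ->]. exists z. ring. Qed.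

Lemma exists_prime n : (2 <= n)%nat -> exists p, pr p /\ Nat.divide p n.
Proof. induction n as [n IH] using (well_founded_induction lt_wf). intros Hn.
  destruct (classic (pr n)) as [H|H]; [exists n; split; auto; apply Nat.divide_refl|].
  assert (exists d, (2 <= d < n)%nat /\ (n mod d = 0)%nat) as [d [Hd1 Hd2]].
  { apply NNPP. intro C. apply H. apply pr_spec. split; [lia|]. intros d Hd E. apply C. exists d; auto. }
  destruct (IH d ltac:(lia) ltac:(lia)) as [p [Hp Hpd]]. exists p; split; auto.
  apply Nat.divide_trans with d; auto. apply modd; auto; lia. Qed.

Definition dvb d n := Nat.eqb (n mod d) 0.
Lemma dvb_spec d n : d <> 0%nat -> dvb d n = true <-> Nat.divide d n.
Proof. intros Hd. unfold dvb. rewrite Nat.eqb_eq. apply modd; auto. Qed.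
Lemma dvb_false d n : d <> 0%nat -> dvb d n = false <-> ~ Nat.divide d n.
Proof. intros Hd. rewrite <- (dvb_spec d n Hd). destruct (dvb d n); intuition congruence. Qed.

Lemma mu_div_sum n : (1 <= n)%nat ->
  rs (fun i => if dvb (S i) n then mu (S i) else 0) n = if Nat.eqb n 1 then 1 else 0.
Proof. intros Hn. destruct (Nat.eqb_spec n 1) as [->|Hn1].
  { simpl. unfold dvb, mu. simpl. unfold omega. simpl. lra. }
  destruct (exists_prime n ltac:(lia)) as [p [Hp [m Hm]]]. assert (P1 := pr_gt1 p Hp).
  assert (Hm1 : (1 <= m)%nat) by nia.
  assert (Hmd : (n / p = m)%nat) by (symmetry; apply (Nat.div_unique _ _ _ 0); lia).
  set (G := fun d => if dvb d n then mu d else 0).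
  set (F := fun i => G (S i)).
  transitivity (rs (fun i => if dvb p (S i) then 0 else F i) n + rs (fun i => if dvb p (S i) then F i else 0) n).
  { rewrite <- rs_add. apply rs_ext. intros i _. unfold F, G; cbv beta. destruct (dvb p (S i)); lra. }
  rewrite (rs_zero_ext (fun i => if dvb p (S i) then 0 else F i) m n).
  2: nia.
  2:{ intros i Hi. destruct (dvb p (S i)) eqn:E1; auto. unfold F, G.
     destruct (dvb (S i) n) eqn:E2; auto. exfalso.
     apply dvb_false in E1; [|lia]. apply dvb_spec in E2; [|lia].
     assert (Nat.divide (S i) m).
     { apply (Nat.gauss _ p). rewrite Nat.mul_comm, <- Hm; auto.
       rewrite Nat.gcd_comm; apply pr_gcd1; auto. }
     assert (S i <= m)%nat by (apply Nat.divide_pos_le; auto; lia). lia. }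
  replace (rs (fun i => if dvb p (S i) then F i else 0) n) with (rs (fun j => G (p*S j)%nat) (n/p))
    by (apply rs_mult; lia). rewrite Hmd. rewrite <- rs_add.
  apply rs_zero. intros i Hi. unfold F, G.
  destruct (dvb (S i) m) eqn:Ei.
  - apply dvb_spec in Ei; [|lia].
    assert (dvb (p * S i) n = true) by (apply dvb_spec; [lia|]; rewrite Hm, (Nat.mul_comm m p); apply Nat.mul_divide_mono_l; auto).
    rewrite H.
    destruct (dvb p (S i)) eqn:Ep.
    + apply dvb_spec in Ep; [|lia]. rewrite mu_mul0 by (auto; lia). lra.
    + apply dvb_false in Ep; [|lia].
      assert (dvb (S i) n = true) by (apply dvb_spec; [lia|]; apply Nat.divide_trans with m; auto; exists p; lia).
      rewrite H0. rewrite mu_mul by (auto; lia). lra.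
  - apply dvb_false in Ei; [|lia].
    assert (dvb (p * S i) n = false).
    { apply dvb_false; [lia|]. intro D. apply Ei. rewrite Hm, (Nat.mul_comm m p) in D.
      apply Nat.mul_divide_cancel_l in D; auto; lia. }
    rewrite H. destruct (dvb p (S i)) eqn:Ep; [lra|].
    apply dvb_false in Ep; [|lia].
    destruct (dvb (S i) n) eqn:E2; [|lra]. exfalso. apply dvb_spec in E2; [|lia]. apply Ei.
    apply (Nat.gauss _ p); [rewrite Nat.mul_comm, <- Hm; auto|rewrite Nat.gcd_comm; apply pr_gcd1; auto].
Qed.

From Coquelicot Require Import Coquelicot.

Definition Pl (y : R) (M : nat) := rs (fun m => y ^ (S m) / INR (S m)) M.

Lemma geom_rs y M : y <> 1 -> rs (fun m => y ^ m) M = (1 - y ^ M) / (1 - y).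
Proof. intros H. induction M as [|M IH]; simpl. field; lra.
  rewrite IH. field. lra. Qed.

Lemma Pl_deriv M c : is_derive (fun t => Pl t M) c (rs (fun m => c ^ m) M).
Proof. induction M as [|M IH]; unfold Pl; simpl.
  - auto_derive; auto.
  - apply (is_derive_plus (fun t => rs (fun m => t ^ S m / INR (S m)) M) (fun t => t ^ S M / INR (S M))).
    + apply IH.
    + auto_derive; auto. change (match M with | 0%nat => 1 | S _ => INR M + 1 end) with (INR (S M)). field. apply not_0_INR; lia.
Qed.

Lemma Pl0 M : Pl 0 M = 0.
Proof. unfold Pl. induction M as [|M IH]; cbn [rs]; [reflexivity|]. rewrite IH. simpl. unfold Rdiv. ring. Qed.

Lemma log_tail y M : 0 <= y < 1 -> 0 <= - ln (1 - y) - Pl y M <= y ^ S M / (1 - y).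
Proof. intros Hy.
  destruct (Req_dec y 0) as [->|Hy0].
  { rewrite Pl0. replace (1 - 0) with 1 by ring. rewrite ln_1. simpl. unfold Rdiv. lra. }
  set (g := fun t => - ln (1 - t) - Pl t M).
  destruct (MVT_cor2 g (fun t => t^M/(1-t)) 0 y) as [c [Hc1 Hc2]].
  - lra.
  - intros c Hc. apply is_derive_Reals.
    replace (c^M/(1-c)) with (1/(1-c) - rs (fun m => c^m) M) by (rewrite geom_rs by lra; field; lra).
    apply (is_derive_minus (fun t => - ln (1 - t)) (fun t => Pl t M)).
    + auto_derive. lra. field. lra.
    + apply Pl_deriv.
  - assert (Eg : g 0 = 0) by (unfold g; rewrite Pl0; replace (1 - 0) with 1 by ring; rewrite ln_1; ring).
    assert (Ey : g y = - ln (1 - y) - Pl y M) by reflexivity.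
    rewrite Eg, Ey in Hc1.
    assert (A1 : 0 <= c ^ M) by (apply pow_le; lra).
    assert (A2 : c ^ M <= y ^ M) by (apply pow_incr; lra).
    assert (A3 : 0 < / (1 - y) ) by (apply Rinv_0_lt_compat; lra).
    assert (A4 : / (1 - c) <= / (1 - y)) by (apply Rinv_le_contravar; lra).
    assert (A5 : 0 < / (1 - c)) by (apply Rinv_0_lt_compat; lra).
    replace (- ln (1 - y) - Pl y M) with (c ^ M / (1 - c) * (y - 0)) by lra. unfold Rdiv. simpl. split.
    + apply Rmult_le_pos; [apply Rmult_le_pos|]; lra.
    + rewrite Rminus_0_r. 
      assert (c ^ M * / (1 - c) <= y ^ M * / (1 - y)) by (apply Rmult_le_compat; lra).
      nra.
Qed.

Lemma rs_scal a F n : rs (fun i => a * F i) n = a * rs F n.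
Proof. induction n; simpl; [ring|rewrite IHn; ring]. Qed.

Lemma rs_exchange (H : nat -> nat -> R) a b :
  rs (fun i => rs (fun j => H i j) b) a = rs (fun j => rs (fun i => H i j) a) b.
Proof. induction a as [|a IH]; simpl.
  - symmetry. apply rs_zero. intros; reflexivity.
  - rewrite IH. rewrite <- rs_add. reflexivity. Qed.

Lemma rs_bound F n B : (forall i, (i < n)%nat -> Rabs (F i) <= B) -> Rabs (rs F n) <= INR n * B.
Proof. induction n as [|n IH]; intros H; cbn [rs].
  - rewrite Rabs_R0; simpl; lra.
  - rewrite S_INR. eapply Rle_trans; [apply Rabs_triang|].
    assert (Rabs (rs F n) <= INR n * B) by (apply IH; intros; apply H; lia).
    assert (Rabs (F n) <= B) by (apply H; lia). lra. Qed.

Lemma sum_rs s n : sum_f_R0 s n = rs s (S n).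
Proof. induction n; simpl in *; [ring|rewrite IHn; reflexivity]. Qed.

Lemma pow_le1 x n : 0 <= x <= 1 -> x ^ n <= 1.
Proof. intros Hx. induction n; simpl; [lra|]. assert (0 <= x ^ n) by (apply pow_le; lra). nra. Qed.

Lemma pow_decr x a b : 0 <= x <= 1 -> (a <= b)%nat -> x ^ b <= x ^ a.
Proof. intros Hx Hab. replace b with (a + (b - a))%nat by lia. rewrite pow_add.
  assert (0 <= x ^ a) by (apply pow_le; lra).
  assert (x ^ (b - a) <= 1) by (apply pow_le1; lra).
  nra. Qed.

Lemma binom_lb h n : 0 <= h -> 1 + INR n * h + INR n * (INR n - 1) / 2 * h ^ 2 <= (1 + h) ^ n.
Proof. intros Hh. induction n as [|n IH]; [simpl; lra|].
  rewrite S_INR. simpl pow. simpl pow in IH. pose proof (pos_INR n).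
  assert (0 <= h * h * INR n) by (apply Rmult_le_pos; nra).
  assert (Q : 0 <= INR n * (INR n - 1)).
  { destruct n; [simpl; lra|]. rewrite S_INR. pose proof (pos_INR n). nra. }
  assert (IH2 := Rmult_le_compat_l (1 + h) _ _ ltac:(lra) IH).
  assert (0 <= INR n * (INR n - 1) * h * (h * h)) by (apply Rmult_le_pos; [apply Rmult_le_pos|]; nra).
  nra. Qed.

Lemma nxn x : 0 < x < 1 -> forall eps, 0 < eps -> exists N, forall n, (n >= N)%nat -> INR n * x ^ n < eps.
Proof. intros Hx eps Heps.
  set (h := / x - 1).
  assert (Hh : 0 < h) by (unfold h; assert (1 < / x) by (rewrite <- Rinv_1; apply Rinv_lt_contravar; lra); lra).
  assert (E1 : 1 + h = / x) by (unfold h; ring).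
  destruct (archimed_cor1 (eps * h ^ 2 / 2)) as [N0 [HN0 HN0p]].
  { apply Rmult_lt_0_compat; [apply Rmult_lt_0_compat; [lra| apply pow_lt; lra]|lra]. }
  exists (S N0). intros n Hn.
  assert (HB := binom_lb h n ltac:(lra)). rewrite E1 in HB.
  assert (Hxn : x ^ n * (/ x) ^ n = 1) by (rewrite <- Rpow_mult_distr, Rinv_r by lra; apply pow1).
  assert (HN0r : 0 < INR N0) by (apply lt_0_INR; lia).
  assert (Hn1 : INR N0 + 1 <= INR n) by (rewrite <- S_INR; apply le_INR; lia).
  assert (H1 : 1 < INR N0 * (eps * h ^ 2 / 2)).
  { apply (Rmult_lt_compat_l (INR N0)) in HN0; auto. rewrite Rinv_r in HN0; lra. }
  assert (Hh2 : 0 < h ^ 2) by (apply pow_lt; lra).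
  assert (H2 : 1 < (INR n - 1) * (eps * h ^ 2 / 2)).
  { assert (INR N0 * (eps * h ^ 2 / 2) <= (INR n - 1) * (eps * h ^ 2 / 2)).
    { apply Rmult_le_compat_r; [|lra]. apply Rlt_le. apply Rmult_lt_0_compat; [apply Rmult_lt_0_compat|]; lra. }
    lra. }
  set (B := (/ x) ^ n) in *.
  assert (HBp : 0 < B) by (unfold B; apply pow_lt; apply Rinv_0_lt_compat; lra).
  assert (Hnp : 0 < INR n) by lra.
  assert (H3 : INR n < eps * B).
  { assert (INR n * 1 < INR n * ((INR n - 1) * (eps * h ^ 2 / 2))) by (apply Rmult_lt_compat_l; lra).
    assert (0 <= INR n * h) by nra.
    nra. }
  assert (x ^ n = / B) by (apply (Rmult_eq_reg_r B); [rewrite Hxn, Rinv_l; lra | lra]).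
  rewrite H. apply (Rmult_lt_reg_r B); auto. rewrite Rmult_assoc, Rinv_l by lra. lra.
Qed.

Definition fx (x : R) (n : nat) := x ^ n / INR n.
Definition Dc (c : nat -> R) (n : nat) := rs (fun i => if dvb (S i) n then c (S i) else 0) n.

Lemma decomp c x k K : (1 <= k)%nat ->
  c k / INR k * Pl (x ^ k) (K / k) = rs (fun i => if dvb k (S i) then c k * fx x (S i) else 0) K.
Proof. intros Hk. unfold Pl. rewrite <- rs_scal.
  transitivity (rs (fun j => (fun d => c k * fx x d) (k * S j)%nat) (K / k)).
  - apply rs_ext. intros j _. unfold fx. rewrite pow_mult, mult_INR. field. split; apply not_0_INR; lia.
  - exact (rs_mult (fun d => c k * fx x d) k K Hk).
Qed.

Lemma Tsum c x K : rs (fun i => c (S i) / INR (S i) * Pl (x ^ S i) (K / S i)) K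
   = rs (fun i => fx x (S i) * Dc c (S i)) K.
Proof.
  rewrite (rs_ext _ (fun i => rs (fun j => if dvb (S i) (S j) then c (S i) * fx x (S j) else 0) K))
    by (intros; apply decomp; lia).
  rewrite rs_exchange. apply rs_ext. intros j Hj. unfold Dc. rewrite <- rs_scal.
  rewrite (rs_zero_ext _ (S j) K).
  - apply rs_ext; intros i _; destruct (dvb (S i) (S j)); ring.
  - lia.
  - intros i Hi. unfold dvb. rewrite Nat.mod_small by lia. reflexivity.
Qed.

Lemma err_bound c x K : 0 < x < 1 -> (forall k, (1 <= k)%nat -> Rabs (c k) <= INR k) ->
  Rabs (rs (fun i => c (S i) / INR (S i) * (- ln (1 - x ^ S i) - Pl (x ^ S i) (K / S i))) K)
  <= INR K * (x ^ S K / (1 - x)).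
Proof. intros Hx Hc. apply rs_bound. intros i Hi. set (k := S i).
  assert (Hxk : x ^ k <= x) by (rewrite <- (pow_1 x) at 2; apply pow_decr; unfold k; lia || lra).
  assert (Hxk0 : 0 <= x ^ k) by (apply pow_le; lra).
  destruct (log_tail (x ^ k) (K / k) ltac:(lra)) as [L1 L2].
  assert (Hd := Nat.div_mod K k ltac:(unfold k; lia)).
  assert (Hm := Nat.mod_upper_bound K k ltac:(unfold k; lia)).
  assert (P1 : (x ^ k) ^ S (K / k) <= x ^ S K).
  { rewrite <- pow_mult. apply pow_decr; [lra|]. nia. }
  assert (P2 : / (1 - x ^ k) <= / (1 - x)) by (apply Rinv_le_contravar; lra).
  assert (P3 : 0 <= (x ^ k) ^ S (K / k)) by (apply pow_le; lra).
  assert (P4 : 0 < / (1 - x)) by (apply Rinv_0_lt_compat; lra).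
  assert (R1 : - ln (1 - x ^ k) - Pl (x ^ k) (K / k) <= x ^ S K / (1 - x)).
  { eapply Rle_trans; [apply L2|]. unfold Rdiv. apply Rmult_le_compat; auto.
    apply Rlt_le, Rinv_0_lt_compat; lra. }
  assert (Hk : 0 < INR k) by (apply lt_0_INR; unfold k; lia).
  assert (C1 : Rabs (c k / INR k) <= 1).
  { unfold Rdiv. rewrite Rabs_mult, Rabs_inv, (Rabs_right (INR k)) by lra.
    apply (Rmult_le_reg_r (INR k)); auto. rewrite Rmult_assoc, Rinv_l by lra.
    specialize (Hc k ltac:(unfold k; lia)). lra. }
  rewrite Rabs_mult. rewrite (Rabs_right (- ln (1 - x ^ k) - Pl (x ^ k) (K / k))) by lra.
  assert (0 <= Rabs (c k / INR k)) by apply Rabs_pos.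
  nra.
Qed.

Lemma gen_conv (c : nat -> R) (y L : R) : 1 < y ->
  (forall k, (1 <= k)%nat -> Rabs (c k) <= INR k) ->
  (forall eps, 0 < eps -> exists N, forall K, (K >= N)%nat ->
       Rabs (rs (fun i => fx (/ y) (S i) * Dc c (S i)) K - L) < eps) ->
  infinite_sum (fun n => - (c (S n) / INR (S n)) * ln (1 - / y ^ (S n))) L.
Proof. intros Hy Hc HT eps Heps.
  set (x := / y) in *.
  assert (Hx : 0 < x < 1).
  { unfold x. split. apply Rinv_0_lt_compat; lra. rewrite <- Rinv_1. apply Rinv_lt_contravar; lra. }
  destruct (HT (eps / 2) ltac:(lra)) as [N1 HN1].
  destruct (nxn x Hx (eps / 2 * (1 - x) / x)) as [N2 HN2].
  { apply Rmult_lt_0_compat; [apply Rmult_lt_0_compat|apply Rinv_0_lt_compat]; lra. }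
  exists (max N1 N2). intros n Hn. unfold R_dist. rewrite sum_rs.
  set (K := S n).
  rewrite (rs_ext _ (fun i => c (S i) / INR (S i) * Pl (x ^ S i) (K / S i) +
        c (S i) / INR (S i) * (- ln (1 - x ^ S i) - Pl (x ^ S i) (K / S i)))).
  2:{ intros i _. unfold x. rewrite pow_inv. ring. }
  rewrite rs_add, Tsum.
  assert (E := err_bound c x K Hx Hc).
  assert (T := HN1 K ltac:(unfold K; lia)).
  assert (Q := HN2 K ltac:(unfold K; lia)).
  assert (Hb : INR K * (x ^ S K / (1 - x)) < eps / 2).
  { replace (INR K * (x ^ S K / (1 - x))) with (INR K * x ^ K * (x / (1 - x))) by (simpl; field; lra).
    replace (eps / 2) with (eps / 2 * (1 - x) / x * (x / (1 - x))) by (field; lra).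
    apply Rmult_lt_compat_r; auto. apply Rdiv_lt_0_compat; lra. }
  set (A := rs (fun i => fx x (S i) * Dc c (S i)) K) in *.
  set (B := rs (fun i => c (S i) / INR (S i) * (- ln (1 - x ^ S i) - Pl (x ^ S i) (K / S i))) K) in *.
  replace (A + B - L) with ((A - L) + B) by ring.
  eapply Rle_lt_trans; [apply Rabs_triang|]. lra.
Qed.

Lemma tau_gt1 : 1 < tau.
Proof. unfold tau. assert (H := sqrt_sqrt 5 ltac:(lra)). assert (H0 := sqrt_pos 5). nra. Qed.

Lemma tau_sq : tau * tau = tau + 1.
Proof. unfold tau. assert (H := sqrt_sqrt 5 ltac:(lra)). field_simplify. rewrite ?H. nra. Qed.

Lemma INR_rsn F n : INR (rsn F n) = rs (fun i => INR (F i)) n.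
Proof. induction n; simpl rsn; simpl rs; [reflexivity|]. rewrite plus_INR, IHn. reflexivity. Qed.

Lemma rsn_le F n : (forall i, (F i <= 1)%nat) -> (rsn F n <= n)%nat.
Proof. intros H. induction n; simpl; [lia|]. specialize (H n). lia. Qed.

Lemma phi_le k : (phi k <= k)%nat.
Proof. rewrite phi_rsn. apply rsn_le. intros i. destruct (_ =? _); lia. Qed.

Lemma Dc_phi n : Dc (fun k => INR (phi k)) n = INR n.
Proof. rewrite <- (NTphi.phi_div_sum n) at 2. rewrite INR_rsn. apply rs_ext. intros i _.
  unfold dvb. destruct (n mod S i =? 0); reflexivity. Qed.

Lemma part1 : infinite_sum
    (fun n : nat => - (INR (phi (S n)) / INR (S n)) * ln (1 - / tau ^ (S n))) tau.
Proof. apply (gen_conv (fun k => INR (phi k)) tau tau). apply tau_gt1.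
  - intros k _. rewrite Rabs_right by (apply Rle_ge, pos_INR). apply le_INR, phi_le.
  - intros eps Heps. set (x := / tau).
    assert (Hx : 0 < x < 1).
    { unfold x. pose proof tau_gt1. split. apply Rinv_0_lt_compat; lra. rewrite <- Rinv_1. apply Rinv_lt_contravar; lra. }
    assert (Htx : tau = x / (1 - x)).
    { pose proof tau_gt1. pose proof tau_sq.
      assert (T1 : tau <> 0) by (intro; lra). assert (T2 : tau - 1 <> 0) by (intro; lra).
      replace (x / (1 - x)) with (/ (tau - 1)) by (unfold x; field; auto).
      apply (Rmult_eq_reg_r (tau - 1)); auto. rewrite Rinv_l by auto. nra. }
    destruct (pow_lt_1_zero x ltac:(rewrite Rabs_right; lra) (eps * (1 - x) / x)) as [N HN].
    { apply Rmult_lt_0_compat; [apply Rmult_lt_0_compat|apply Rinv_0_lt_compat]; lra. }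
    exists N. intros K HK.
    rewrite (rs_ext _ (fun i => x * x ^ i)).
    2:{ intros i _. rewrite Dc_phi. unfold fx. simpl pow. field. apply not_0_INR; lia. }
    rewrite rs_scal, geom_rs by lra. rewrite Htx.
    replace (x * ((1 - x ^ K) / (1 - x)) - x / (1 - x)) with (- (x ^ K) * (x / (1 - x))) by (field; lra).
    rewrite Rabs_mult, Rabs_Ropp, (Rabs_right (x / (1 - x))) by (apply Rle_ge, Rlt_le, Rdiv_lt_0_compat; lra).
    specialize (HN K HK).
    replace eps with (eps * (1 - x) / x * (x / (1 - x))) by (field; lra).
    apply Rmult_lt_compat_r; auto. apply Rdiv_lt_0_compat; lra.
Qed.

Lemma mu_abs k : Rabs (mu k) <= 1.
Proof. unfold mu. destruct (squarefreeb k). rewrite pow_1_abs; lra. rewrite Rabs_R0; lra. Qed.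

Lemma part2 : infinite_sum
    (fun n : nat => - (mu (S n) / INR (S n)) * ln (1 - / tau ^ (S n))) (/ tau).
Proof. apply (gen_conv mu tau (/ tau)). apply tau_gt1.
  - intros k Hk. eapply Rle_trans; [apply mu_abs|]. apply (le_INR 1). auto.
  - intros eps Heps. exists 1%nat. intros K HK. destruct K as [|K]; [lia|].
    assert (E : rs (fun i => fx (/ tau) (S i) * Dc mu (S i)) (S K) = / tau).
    { clear HK. induction K as [|K IH].
      - simpl. unfold Dc. rewrite (mu_div_sum 1) by lia. simpl. unfold fx. simpl. field. pose proof tau_gt1; lra.
      - cbn [rs] in *. rewrite IH. unfold Dc. rewrite (mu_div_sum (S (S K))) by lia. simpl. ring. }
    rewrite E. unfold Rminus. rewrite Rplus_opp_r, Rabs_R0. auto.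
Qed.

(* Series indexed by n >= 0 with k = n+1. *)
Theorem lemma2 :
  infinite_sum
    (fun n : nat => - (INR (phi (S n)) / INR (S n)) * ln (1 - / tau ^ (S n)))
    tau
  /\
  infinite_sum
    (fun n : nat => - (mu (S n) / INR (S n)) * ln (1 - / tau ^ (S n)))
    (/ tau).
Proof. split; [apply part1 | apply part2]. Qed.
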